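(* For a finite set $S$, the following three classes of $S$-cubes in $\Lambda$ coincide: (i) the strongly biCartesian $S$-cubes in $\Lambda$; (ii) the images under $\Delta\to\Lambda$ of strongly biCartesian $S$-cubes in $\Delta$ all of whose morphisms are left active; (iii) the images under $\Delta\to\Lambda$ of strongly biCartesian $S$-cubes in $\Delta$ all of whose morphisms are right active.
   Context: $\Delta$: simplex category of $[n]=\{0<\dots<n\}$ and weakly monotone maps; $f:[m]\to[n]$ is left active if $f(0)=0$, right active if $f(m)=n$. $\Lambda$: Connes' cyclic category; the canonical functor $\Delta\to\Lambda$, $[n]\mapsto\langle n\rangle=(\mathbb{Z}/(n+1),+1)$, identifies $\Delta$ with the slice $\Lambda_{/\langle0\rangle}$ and is the forgetful functor. An $S$-cube in a category $\mathcal{D}$ is a functor $Q:\mathcal{P}(S)^{\mathrm{op}}\to\mathcal{D}$ ($\mathcal{P}(S)$ the subset poset); it is strongly biCartesian if every square $Q(T\cup\{s,s'\})\to Q(T\cup\{s\}),Q(T\cup\{s'\})\to Q(T)$ ($s\neq s'\notin T$) is both a pullback and a pushout in $\mathcal{D}$. *)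

(* Defs.v *)
From HB Require Import structures.
From mathcomp Require Import all_boot all_order all_algebra.
Set Implicit Arguments. Unset Strict Implicit. Unset Printing Implicit Defensive.
Import Order.TTheory GRing.Theory Num.Theory.

(* A (pre)category presented by raw morphisms, a validity predicate singling
   out the genuine morphisms, and a setoid equality of morphisms. *)
Record Cat := Cat_ {
  ob : Type;
  hom : ob -> ob -> Type;
  valid : forall a b, hom a b -> Prop;
  heq : forall a b, hom a b -> hom a b -> Prop;
  idm : forall a, hom a a;
  comp : forall a b c, hom b c -> hom a b -> hom a c }.

Arguments valid {_ _ _} _.
Arguments heq {_ _ _} _ _.
Arguments idm {_} _.
Arguments comp {_ _ _ _} _ _.

Section CatDefs.
Variable C : Cat.

Definition is_pullback (A B D E : ob C) (p : hom A B) (q : hom A D)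
    (f : hom B E) (g : hom D E) : Prop :=
  heq (comp f p) (comp g q) /\
  forall (X : ob C) (u : hom X B) (v : hom X D),
    valid u -> valid v -> heq (comp f u) (comp g v) ->
    exists w : hom X A, valid w /\ heq (comp p w) u /\ heq (comp q w) v /\
      forall w' : hom X A, valid w' -> heq (comp p w') u -> heq (comp q w') v ->
        heq w' w.

Definition is_pushout (A B D E : ob C) (p : hom A B) (q : hom A D)
    (f : hom B E) (g : hom D E) : Prop :=
  heq (comp f p) (comp g q) /\
  forall (X : ob C) (u : hom B X) (v : hom D X),
    valid u -> valid v -> heq (comp u p) (comp v q) ->
    exists w : hom E X, valid w /\ heq (comp w f) u /\ heq (comp w g) v /\
      forall w' : hom E X, valid w' -> heq (comp w' f) u -> heq (comp w' g) v ->
        heq w' w.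

Definition is_iso (a b : ob C) (f : hom a b) : Prop :=
  valid f /\ exists g : hom b a, valid g /\
    heq (comp g f) (idm a) /\ heq (comp f g) (idm b).

(* An S-cube: a functor P(S)^op -> C.  [cmor T U] is the image of the
   inclusion T \subset U (only meaningful when T \subset U). *)
Record cube (S : finType) := Cube {
  cob : {set S} -> ob C;
  cmor : forall T U : {set S}, hom (cob U) (cob T) }.

Definition is_cube (S : finType) (Q : cube S) : Prop :=
  (forall T U : {set S}, T \subset U -> valid (cmor Q T U)) /\
  (forall T : {set S}, heq (cmor Q T T) (idm (cob Q T))) /\
  (forall T U V : {set S}, T \subset U -> U \subset V ->
     heq (cmor Q T V) (comp (cmor Q T U) (cmor Q U V))).

Definition strongly_biCartesian (S : finType) (Q : cube S) : Prop :=
  forall (T : {set S}) (s s' : S), s != s' -> s \notin T -> s' \notin T ->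
    is_pullback (cmor Q (s |: T) (s |: (s' |: T)))
                (cmor Q (s' |: T) (s |: (s' |: T)))
                (cmor Q T (s |: T)) (cmor Q T (s' |: T)) /\
    is_pushout  (cmor Q (s |: T) (s |: (s' |: T)))
                (cmor Q (s' |: T) (s |: (s' |: T)))
                (cmor Q T (s |: T)) (cmor Q T (s' |: T)).

Definition cube_iso (S : finType) (Q Q' : cube S) : Prop :=
  exists alpha : forall T : {set S}, hom (cob Q T) (cob Q' T),
    (forall T, is_iso (alpha T)) /\
    forall T U : {set S}, T \subset U ->
      heq (comp (alpha T) (cmor Q T U)) (comp (cmor Q' T U) (alpha U)).

End CatDefs.

(* The simplex category: object n stands for [n] = {0<...<n}; a morphism
   [m] -> [n] is a weakly monotone map, represented by a function on nat
   considered on {0..m}. *)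
Definition Delta : Cat :=
  @Cat_ nat (fun _ _ => nat -> nat)
    (fun m n (f : nat -> nat) =>
       (forall i j, i <= j -> j <= m -> f i <= f j) /\
       (forall i, i <= m -> f i <= n))
    (fun m n (f g : nat -> nat) => forall i, i <= m -> f i = g i)
    (fun _ => fun i => i)
    (fun _ _ _ (g f : nat -> nat) => fun i => g (f i)).

Definition left_active (m n : nat) (f : nat -> nat) : Prop := f 0 = 0.
Definition right_active (m n : nat) (f : nat -> nat) : Prop := f m = n.

Local Open Scope ring_scope.

(* Connes' cyclic category, via its paracyclic model: object n stands for
   <n> = (Z/(n+1), +1); a morphism <m> -> <n> is a weakly monotone map
   f : Z -> Z with f (i + (m+1)) = f i + (n+1), taken modulo translation by
   multiples of (n+1). *)
Definition Lambda : Cat :=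
  @Cat_ nat (fun _ _ => int -> int)
    (fun m n (f : int -> int) =>
       (forall i j : int, i <= j -> f i <= f j) /\
       (forall i : int, f (i + (m.+1)%:Z) = f i + (n.+1)%:Z))
    (fun m n (f g : int -> int) =>
       exists k : int, forall i : int, g i = f i + k * (n.+1)%:Z)
    (fun _ => fun i => i)
    (fun _ _ _ (g f : int -> int) => fun i => g (f i)).

(* The canonical functor Delta -> Lambda, [n] |-> <n>: a monotone map
   f : [m] -> [n] is extended to Z by f (r + q(m+1)) = f r + q(n+1). *)
Definition iota (m n : nat) (f : nat -> nat) : int -> int :=
  fun i => (f (absz (i %% (m.+1)%:Z)%Z))%:Z + (i %/ (m.+1)%:Z)%Z * (n.+1)%:Z.

Definition cube_image (S : finType) (P : cube Delta S) : cube Lambda S :=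
  @Cube Lambda S (cob P)
    (fun T U => iota (cob P U) (cob P T) (cmor P T U)).

Definition left_active_cube (S : finType) (P : cube Delta S) : Prop :=
  forall T U : {set S}, T \subset U ->
    left_active (cob P U) (cob P T) (cmor P T U).

Definition right_active_cube (S : finType) (P : cube Delta S) : Prop :=
  forall T U : {set S}, T \subset U ->
    right_active (cob P U) (cob P T) (cmor P T U).

(* Main.v *)
Require Import Defs.
From mathcomp Require Import all_boot all_order all_algebra.
From mathcomp Require Import zify ring.
Set Implicit Arguments. Unset Strict Implicit. Unset Printing Implicit Defensive.
Import Order.TTheory GRing.Theory Num.Theory.
Local Open Scope ring_scope.

Lemma decompP (m : nat) (i : int) : exists q : int, exists r : nat,
  (r <= m)%N /\ i = q * (m.+1)%:Z + r%:Z /\ (i %/ (m.+1)%:Z)%Z = q /\ (absz (i %% (m.+1)%:Z)%Z) = r.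
Proof.
exists (i %/ (m.+1)%:Z)%Z, (absz (i %% (m.+1)%:Z)%Z).
have h0 : 0 <= (i %% (m.+1)%:Z)%Z by apply: modz_ge0.
have h1 : (i %% (m.+1)%:Z)%Z < (m.+1)%:Z by apply: ltz_pmod.
have e : ((absz (i %% (m.+1)%:Z)%Z))%:Z = (i %% (m.+1)%:Z)%Z by rewrite gez0_abs.
split; first by lia.
split=> //. by rewrite e -divz_eq.
Qed.

Lemma divmod_qr (m : nat) (q : int) (r : nat) : (r <= m)%N ->
  ((q * (m.+1)%:Z + r%:Z) %/ (m.+1)%:Z)%Z = q /\ absz ((q * (m.+1)%:Z + r%:Z) %% (m.+1)%:Z)%Z = r.
Proof.
move=> hr.
have hN : (m.+1)%:Z != 0 by [].
split.
  by rewrite divzMDl // divz_small ?addr0 //.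
by rewrite modzMDl modz_small //.
Qed.

Definition ext (m : nat) (N : int) (w : nat -> nat) (i : int) : int :=
  (w (absz (i %% (m.+1)%:Z)%Z))%:Z + (i %/ (m.+1)%:Z)%Z * N.

Lemma iotaE m n f i : Defs.iota m n f i = ext m (n.+1)%:Z f i.
Proof. by []. Qed.

Lemma ext_qr m N w (q : int) (r : nat) : (r <= m)%N ->
  ext m N w (q * (m.+1)%:Z + r%:Z) = (w r)%:Z + q * N.
Proof. move=> hr; rewrite /ext; have [-> ->] := divmod_qr q hr; by []. Qed.

Lemma ext_on m N w (r : nat) : (r <= m)%N -> ext m N w r%:Z = (w r)%:Z.
Proof. move=> hr; have := ext_qr N w 0 hr. by rewrite mul0r add0r mul0r addr0. Qed.

Lemma ext_shift m N w i (k : int) :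
  ext m N w (i + k * (m.+1)%:Z) = ext m N w i + k * N.
Proof.
have [q [r [hr [-> _]]]] := decompP m i.
have -> : q * (m.+1)%:Z + r%:Z + k * (m.+1)%:Z = (q + k) * (m.+1)%:Z + r%:Z by ring.
rewrite !ext_qr //. ring.
Qed.

Lemma ext_shift1 m N w i : ext m N w (i + (m.+1)%:Z) = ext m N w i + N.
Proof. have := @ext_shift m N w i 1. by rewrite !mul1r. Qed.

Lemma ext_mono m N w :
  (forall i j, (i <= j)%N -> (j <= m)%N -> (w i <= w j)%N) ->
  (w m)%:Z <= (w 0%N)%:Z + N ->
  forall i j : int, i <= j -> ext m N w i <= ext m N w j.
Proof.
move=> hw hN i j hij.
have [q1 [r1 [h1 [e1 _]]]] := decompP m i.
have [q2 [r2 [h2 [e2 _]]]] := decompP m j.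
subst i j. rewrite !ext_qr //.
have w0 := hw 0%N r2 (leq0n _) h2.
have wm := hw r1 m h1 (leqnn _).
have w0m := hw 0%N m (leq0n _) (leqnn _).
have N0 : 0 <= N by lia.
have hq : q1 <= q2.
  case: (lerP q1 q2) => // hlt.
  have : (q2 + 1) * (m.+1)%:Z <= q1 * (m.+1)%:Z by rewrite ler_pM2r //; lia.
  lia.
have [eq|lt] : q1 = q2 \/ q1 + 1 <= q2 by lia.
  subst q2. have hr : (r1 <= r2)%N by nia.
  have := hw r1 r2 hr h2. lia.
nia.
Qed.

Definition dval (m n : nat) (f : nat -> nat) : Prop :=
  (forall i j, (i <= j)%N -> (j <= m)%N -> (f i <= f j)%N) /\
  (forall i, (i <= m)%N -> (f i <= n)%N).

Lemma DvalE m n f : @valid Delta m n f = dval m n f. Proof. by []. Qed.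

Definition lval (m n : nat) (f : int -> int) : Prop :=
  (forall i j : int, i <= j -> f i <= f j) /\
  (forall i : int, f (i + (m.+1)%:Z) = f i + (n.+1)%:Z).

Lemma LvalE m n f : @valid Lambda m n f = lval m n f. Proof. by []. Qed.

Definition LEq (n : nat) (f g : int -> int) : Prop :=
  exists k : int, forall i : int, g i = f i + k * (n.+1)%:Z.

Lemma LeqE m n f g : @heq Lambda m n f g = LEq n f g. Proof. by []. Qed.

Lemma DeqE m n f g : @heq Delta m n f g = (forall i, (i <= m)%N -> f i = g i). Proof. by []. Qed.

Lemma iota_valid m n f : dval m n f -> lval m n (Defs.iota m n f).
Proof.
move=> [h1 h2]; split.
  apply: ext_mono => //. have := h2 m (leqnn _). lia.
move=> i; exact: ext_shift1.
Qed.

Lemma lval_shift m n F : lval m n F -> forall i (k : int),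
  F (i + k * (m.+1)%:Z) = F i + k * (n.+1)%:Z.
Proof.
move=> [_ hF].
have pos : forall (k : nat) i, F (i + k%:Z * (m.+1)%:Z) = F i + k%:Z * (n.+1)%:Z.
  elim=> [|k IH] i; first by rewrite !mul0r !addr0.
  have e : (k.+1)%:Z = k%:Z + 1 by lia.
  have -> : i + (k.+1)%:Z * (m.+1)%:Z = (i + k%:Z * (m.+1)%:Z) + (m.+1)%:Z.
    rewrite e; ring.
  rewrite hF IH e; ring.
move=> i [k|k]; first exact: pos.
rewrite NegzE.
have := pos k.+1 (i - (k.+1)%:Z * (m.+1)%:Z).
rewrite subrK => e. rewrite !mulNr e. by rewrite addrK.
Qed.

Lemma lval_eq m n F G : lval m n F -> lval m n G ->
  (forall r : nat, (r <= m)%N -> F r%:Z = G r%:Z) -> forall i, F i = G i.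
Proof.
move=> hF hG he i.
have [q [r [hr [-> _]]]] := decompP m i.
rewrite addrC (lval_shift hF) (lval_shift hG) he //.
Qed.

Lemma iota_on m n f (r : nat) : (r <= m)%N -> Defs.iota m n f r%:Z = (f r)%:Z.
Proof. rewrite iotaE. exact: ext_on. Qed.

Lemma iota_comp m n p f g : dval m n f -> forall i,
  Defs.iota m p (fun t => g (f t)) i = Defs.iota n p g (Defs.iota m n f i).
Proof.
move=> [_ hf] i.
have [q [r [hr [-> _]]]] := decompP m i.
by rewrite !iotaE !ext_qr // [(f r)%:Z + _]addrC ext_qr ?hf.
Qed.

Lemma iota_heq m n f f' : (forall i, (i <= m)%N -> f i = f' i) ->
  forall i, Defs.iota m n f i = Defs.iota m n f' i.
Proof.
move=> h i. have [q [r [hr [-> _]]]] := decompP m i. by rewrite !iotaE !ext_qr // h.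
Qed.

Lemma restrictP m n F : lval m n F -> (forall r : nat, (r <= m)%N -> 0 <= F r%:Z <= n%:Z) ->
  dval m n (fun r => absz (F r%:Z)) /\ forall i, Defs.iota m n (fun r => absz (F r%:Z)) i = F i.
Proof.
move=> hF hb.
have ab : forall r : nat, (r <= m)%N -> (absz (F r%:Z))%:Z = F r%:Z.
  move=> r hr. rewrite gez0_abs //. by have /andP[] := hb r hr.
split. split.
  move=> i j hij hj. have hi : (i <= m)%N by apply: leq_trans hij hj.
  have := (proj1 hF) i%:Z j%:Z. rewrite -(ab i hi) -(ab j hj).
  move=> h. have := h ltac:(lia). lia.
  move=> i hi. have := hb i hi. rewrite -(ab i hi). lia.
move=> i.
have [q [r [hr [-> _]]]] := decompP m i.
by rewrite iotaE ext_qr // ab // [q * _ + _]addrC (lval_shift hF).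
Qed.

Lemma iota_id n i : Defs.iota n n (fun t => t) i = i.
Proof.
have [q [r [hr [e _]]]] := decompP n i. rewrite e iotaE ext_qr //. by rewrite addrC.
Qed.

Definition c0 : nat -> nat := fun _ => 0%N.

Lemma c0_valid m : dval m 0 c0. Proof. by split. Qed.

Lemma pi0P x (v : int) : Defs.iota x 0 c0 v = 0 -> 0 <= v <= x%:Z.
Proof.
have [q [r [hr [e _]]]] := decompP x v. rewrite e iotaE ext_qr // /c0 => h.
have hq : q = 0 by lia. subst q. lia.
Qed.

Lemma pi_shift x (v k : int) : Defs.iota x 0 c0 (v + k * (x.+1)%:Z) = Defs.iota x 0 c0 v + k.
Proof. by rewrite iotaE ext_shift mulr1. Qed.

Lemma jumpP (h : int -> int) (x : nat) :
  (forall i j, i <= j -> h i <= h j) -> (forall i, h (i + (x.+1)%:Z) = h i + 1) ->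
  exists j : int, forall i : nat, (i <= x)%N -> h (j + i%:Z) = h j.
Proof.
move=> hm hp.
have gen : forall n : nat, h 0 < h n%:Z -> exists t : nat, (t < n)%N /\ h t%:Z < h (t.+1)%:Z.
  elim=> [|n IH] H; first by have : h 0 = h 0%:Z by []; lia.
  case: (lerP (h n.+1%:Z) (h n%:Z)) => H1.
    have [t [ht1 ht2]] := IH ltac:(lia). exists t. split => //. lia.
  by exists n.
have [t [ht1 ht2]] : exists t : nat, (t < x.+1)%N /\ h t%:Z < h (t.+1)%:Z.
  apply: gen. have := hp 0. rewrite add0r => ->. by rewrite ltzD1.
exists (t.+1)%:Z => i hi.
have e1 := hm (t.+1)%:Z ((t.+1)%:Z + i%:Z) ltac:(lia).
have e2 := hm ((t.+1)%:Z + i%:Z) (t%:Z + (x.+1)%:Z) ltac:(lia).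
rewrite hp in e2. lia.
Qed.

Lemma LEq_refl n f : LEq n f f. Proof. by exists 0 => i; rewrite mul0r addr0. Qed.
Lemma LEq_sym n f g : LEq n f g -> LEq n g f.
Proof. move=> [k hk]; exists (-k) => i; rewrite hk mulNr addrK. by []. Qed.
Lemma LEq_trans n f g h : LEq n f g -> LEq n g h -> LEq n f h.
Proof. move=> [k1 h1] [k2 h2]; exists (k1 + k2) => i; rewrite h2 h1 mulrDl addrA. by []. Qed.
Lemma LEq_compl m n h f g : lval m n h -> LEq m f g -> LEq n (fun i => h (f i)) (fun i => h (g i)).
Proof. move=> hh [k hk]; exists k => i; by rewrite hk (lval_shift hh). Qed.
Lemma LEq_compr n f g h : LEq n f g -> LEq n (fun i => f (h i)) (fun i => g (h i)).
Proof. move=> [k hk]; exists k => i; by rewrite hk. Qed.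
Arguments LEq_compr {n f g h}.
Lemma LEq_ext n f g : (forall i, f i = g i) -> LEq n f g.
Proof. move=> h; exists 0 => i; by rewrite h mul0r addr0. Qed.

Lemma lval_comp m n p f g : lval m n f -> lval n p g -> lval m p (fun i => g (f i)).
Proof.
move=> [f1 f2] [g1 g2]; split; first by move=> i j hij; apply: g1; apply: f1.
by move=> i; rewrite f2 g2.
Qed.

Lemma lval_addc m n F (c : int) : lval m n F -> lval m n (fun i => F i + c).
Proof. move=> [h1 h2]; split; first by move=> i j hij; rewrite lerD2r; apply: h1.
move=> i; rewrite h2. by rewrite -!addrA [_ + c]addrC. Qed.

Lemma lval_rot n (c : int) : lval n n (fun i => i + c).
Proof. split; first by move=> i j hij; rewrite lerD2r.
move=> i; by rewrite -!addrA [_ + c]addrC. Qed.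

Lemma lval_shiftarg m n F (c : int) : lval m n F -> lval m n (fun i => F (c + i)).
Proof. move=> [h1 h2]; split; first by move=> i j hij; apply: h1; rewrite lerD2l.
move=> i; by rewrite addrA h2. Qed.

Lemma small_eq (x y : nat) (k : int) (n : nat) : (x <= n)%N -> (y <= n)%N ->
  x%:Z = y%:Z + k * (n.+1)%:Z -> x = y.
Proof.
move=> hx hy e.
have [hk|[hk|hk]] : k = 0 \/ 1 <= k \/ k <= -1 by lia.
- subst k. lia.
- have : (n.+1)%:Z <= k * (n.+1)%:Z by rewrite ler_peMl //.
  lia.
- have : k * (n.+1)%:Z <= - (n.+1)%:Z by rewrite -mulN1r ler_pM2r.
  lia.
Qed.

Lemma small_eqz (x y : int) (k : int) (n : nat) : 0 <= x <= n%:Z -> 0 <= y <= n%:Z ->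
  x = y + k * (n.+1)%:Z -> x = y.
Proof.
move=> hx hy e.
have [hk|[hk|hk]] : k = 0 \/ 1 <= k \/ k <= -1 by lia.
- subst k. lia.
- have : (n.+1)%:Z <= k * (n.+1)%:Z by rewrite ler_peMl //.
  lia.
- have : k * (n.+1)%:Z <= - (n.+1)%:Z by rewrite -mulN1r ler_pM2r.
  lia.
Qed.

Lemma mulN_eq0 (k1 k2 : int) (n : nat) : k1 * (n.+1)%:Z = k2 * (n.+1)%:Z -> k1 = k2.
Proof. by apply: mulIf. Qed.


Definition LPB (a b d e : nat) (p q f g : int -> int) : Prop :=
  LEq e (fun i => f (p i)) (fun i => g (q i)) /\
  forall (X : nat) (u v : int -> int), lval X b u -> lval X d v ->
    LEq e (fun i => f (u i)) (fun i => g (v i)) ->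
    exists w, lval X a w /\ LEq b (fun i => p (w i)) u /\ LEq d (fun i => q (w i)) v /\
      forall w', lval X a w' -> LEq b (fun i => p (w' i)) u -> LEq d (fun i => q (w' i)) v ->
        LEq a w' w.

Definition LPO (a b d e : nat) (p q f g : int -> int) : Prop :=
  LEq e (fun i => f (p i)) (fun i => g (q i)) /\
  forall (X : nat) (u v : int -> int), lval b X u -> lval d X v ->
    LEq X (fun i => u (p i)) (fun i => v (q i)) ->
    exists w, lval e X w /\ LEq X (fun i => w (f i)) u /\ LEq X (fun i => w (g i)) v /\
      forall w', lval e X w' -> LEq X (fun i => w' (f i)) u -> LEq X (fun i => w' (g i)) v ->
        LEq X w' w.

Definition DE (m : nat) (f g : nat -> nat) : Prop := forall i, (i <= m)%N -> f i = g i.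

Definition DPB (a b d e : nat) (p q f g : nat -> nat) : Prop :=
  DE a (fun i => f (p i)) (fun i => g (q i)) /\
  forall (X : nat) (u v : nat -> nat), dval X b u -> dval X d v ->
    DE X (fun i => f (u i)) (fun i => g (v i)) ->
    exists w, dval X a w /\ DE X (fun i => p (w i)) u /\ DE X (fun i => q (w i)) v /\
      forall w', dval X a w' -> DE X (fun i => p (w' i)) u -> DE X (fun i => q (w' i)) v ->
        DE X w' w.

Definition DPO (a b d e : nat) (p q f g : nat -> nat) : Prop :=
  DE a (fun i => f (p i)) (fun i => g (q i)) /\
  forall (X : nat) (u v : nat -> nat), dval b X u -> dval d X v ->
    DE a (fun i => u (p i)) (fun i => v (q i)) ->
    exists w, dval e X w /\ DE b (fun i => w (f i)) u /\ DE d (fun i => w (g i)) v /\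
      forall w', dval e X w' -> DE b (fun i => w' (f i)) u -> DE d (fun i => w' (g i)) v ->
        DE e w' w.

Lemma LPBE a b d e p q f g : @is_pullback Lambda a b d e p q f g = LPB a b d e p q f g.
Proof. by []. Qed.
Lemma LPOE a b d e p q f g : @is_pushout Lambda a b d e p q f g = LPO a b d e p q f g.
Proof. by []. Qed.
Lemma DPBE a b d e p q f g : @is_pullback Delta a b d e p q f g = DPB a b d e p q f g.
Proof. by []. Qed.
Lemma DPOE a b d e p q f g : @is_pushout Delta a b d e p q f g = DPO a b d e p q f g.
Proof. by []. Qed.

Lemma iota2_on m n p f g (r : nat) : dval m n f -> (r <= m)%N ->
  Defs.iota n p g (Defs.iota m n f r%:Z) = (g (f r))%:Z.
Proof. move=> [_ hf] hr. by rewrite iota_on // iota_on // hf. Qed.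

Lemma iota_commute a b d e p q f g : dval a b p -> dval a d q ->
  DE a (fun i => f (p i)) (fun i => g (q i)) ->
  forall i, Defs.iota b e f (Defs.iota a b p i) = Defs.iota d e g (Defs.iota a d q i).
Proof. move=> hp hq h i. rewrite -!iota_comp //. exact: iota_heq. Qed.

Lemma iota_pi m n f i : dval m n f ->
  Defs.iota m 0 c0 i = Defs.iota n 0 c0 (Defs.iota m n f i).
Proof. move=> hf. exact: (iota_comp 0 c0 hf i). Qed.

Lemma pb_L2D a b d e p q f g : dval a b p -> dval a d q -> dval b e f -> dval d e g ->
  LPB a b d e (Defs.iota a b p) (Defs.iota a d q) (Defs.iota b e f) (Defs.iota d e g) ->
  DPB a b d e p q f g.
Proof.
move=> hp hq hf hg [[k0 Lc] Lu].
have comm : DE a (fun i => f (p i)) (fun i => g (q i)).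
  move=> i hi. have := Lc i%:Z. rewrite !iota2_on // => h.
  apply/esym. apply: (small_eq _ _ h).
    by apply: (proj2 hg); apply: (proj2 hq).
  by apply: (proj2 hf); apply: (proj2 hp).
split => // x u v hu hv huv.
have Hc : LEq e (fun i => Defs.iota b e f (Defs.iota x b u i))
               (fun i => Defs.iota d e g (Defs.iota x d v i)).
  apply: LEq_ext => i. rewrite -!iota_comp //. exact: iota_heq.
have [W [hW [[k1 h1] [[k2 h2] hU]]]] := Lu x _ _ (iota_valid hu) (iota_valid hv) Hc.
have hpi : forall i, Defs.iota a 0 c0 (W i + k1 * (a.+1)%:Z) = Defs.iota x 0 c0 i.
  move=> i. rewrite pi_shift (iota_pi _ hp).
  have -> : Defs.iota a b p (W i) = Defs.iota x b u i + (- k1) * (b.+1)%:Z.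
    by rewrite h1 mulNr -addrA subrr addr0.
  by rewrite pi_shift (iota_pi _ hu) subrK.
set W' := fun i => W i + k1 * (a.+1)%:Z.
have hW' : lval x a W' by apply: lval_addc.
have hb : forall r : nat, (r <= x)%N -> 0 <= W' r%:Z <= a%:Z.
  move=> r hr. apply: pi0P. rewrite /W' hpi iota_on //.
have [hw hwE] := restrictP hW' hb.
set w := fun r => absz (W' r%:Z).
have Ww : forall i, (i <= x)%N -> W' i%:Z = (w i)%:Z.
  move=> i hi. by rewrite -hwE iota_on.
have pw : forall i, Defs.iota a b p (W' i) = Defs.iota x b u i.
  move=> i. by rewrite /W' (lval_shift (iota_valid hp)) h1.
have keq : k1 = k2.
  have e1 := @iota_commute a b d e p q f g hp hq comm (W 0).
  have e2 : Defs.iota b e f (Defs.iota x b u 0) = Defs.iota d e g (Defs.iota x d v 0).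
    rewrite -!iota_comp //. exact: iota_heq.
  rewrite h1 h2 (lval_shift (iota_valid hf)) (lval_shift (iota_valid hg)) e1 in e2.
  move/addrI: e2. exact: mulN_eq0.
subst k2.
have qw : forall i, Defs.iota a d q (W' i) = Defs.iota x d v i.
  move=> i. by rewrite /W' (lval_shift (iota_valid hq)) h2.
exists w. split; first exact: hw.
split.
  move=> i hi. have := pw i%:Z. rewrite Ww // !iota_on //; last exact: (proj2 hw).
  by case.
split.
  move=> i hi. have := qw i%:Z. rewrite Ww // !iota_on //; last exact: (proj2 hw).
  by case.
move=> w2 hw2 pw2 qw2.
have L1 : LEq b (fun i => Defs.iota a b p (Defs.iota x a w2 i)) (Defs.iota x b u).
  apply: LEq_ext => i. rewrite -iota_comp //. exact: iota_heq.
have L2 : LEq d (fun i => Defs.iota a d q (Defs.iota x a w2 i)) (Defs.iota x d v).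
  apply: LEq_ext => i. rewrite -iota_comp //. exact: iota_heq.
have [k3 hk3] := hU _ (iota_valid hw2) L1 L2.
move=> i hi.
have := Ww i hi. rewrite /W' hk3 iota_on // -addrA => h.
have h' : (w i)%:Z = (w2 i)%:Z + (k3 + k1) * (a.+1)%:Z by rewrite -h mulrDl.
apply/esym. apply: (small_eq _ _ h'). exact: (proj2 hw). exact: (proj2 hw2).
Qed.

Lemma comm_of a b d e p q f g : dval a b p -> dval a d q -> dval b e f -> dval d e g ->
  LEq e (fun i => Defs.iota b e f (Defs.iota a b p i)) (fun i => Defs.iota d e g (Defs.iota a d q i)) ->
  DE a (fun i => f (p i)) (fun i => g (q i)).
Proof.
move=> hp hq hf hg [k0 Lc] i hi. have := Lc i%:Z. rewrite !iota2_on // => h.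
apply/esym. apply: (small_eq _ _ h).
  by apply: (proj2 hg); apply: (proj2 hq).
by apply: (proj2 hf); apply: (proj2 hp).
Qed.

Lemma po_L2D a b d e p q f g : dval a b p -> dval a d q -> dval b e f -> dval d e g ->
  LPO a b d e (Defs.iota a b p) (Defs.iota a d q) (Defs.iota b e f) (Defs.iota d e g) ->
  DPO a b d e p q f g.
Proof.
move=> hp hq hf hg [Lc Lu].
have comm := comm_of hp hq hf hg Lc.
split => // x u v hu hv huv.
have Hc : LEq x (fun i => Defs.iota b x u (Defs.iota a b p i))
               (fun i => Defs.iota d x v (Defs.iota a d q i)).
  apply: LEq_ext => i. rewrite -!iota_comp //. exact: iota_heq.
have [W [hW [[k1 h1] [[k2 h2] hU]]]] := Lu x _ _ (iota_valid hu) (iota_valid hv) Hc.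
have H0 : LEq 0 (fun i => Defs.iota b 0 c0 (Defs.iota a b p i))
               (fun i => Defs.iota d 0 c0 (Defs.iota a d q i)).
  apply: LEq_ext => i. by rewrite -(iota_pi _ hp) -(iota_pi _ hq).
have [W0 [_ [_ [_ hU0]]]] := Lu 0%N _ _ (iota_valid (c0_valid b)) (iota_valid (c0_valid d)) H0.
have A1 : LEq 0 (Defs.iota e 0 c0) W0.
  apply: hU0; first exact: iota_valid (c0_valid e).
    apply: LEq_ext => i. by rewrite -(iota_pi _ hf).
  apply: LEq_ext => i. by rewrite -(iota_pi _ hg).
have B1 : LEq 0 (fun i => Defs.iota x 0 c0 (W i)) W0.
  apply: hU0; first exact: lval_comp hW (iota_valid (c0_valid x)).
    exists k1 => i. rewrite /= (iota_pi i hu) h1 pi_shift. by rewrite mulr1.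
  exists k2 => i. rewrite /= (iota_pi i hv) h2 pi_shift. by rewrite mulr1.
have [k4 h4] := LEq_trans A1 (LEq_sym B1).
set W' := fun i => W i + (- k4) * (x.+1)%:Z.
have hW' : lval e x W' by apply: lval_addc.
have hpi : forall i, Defs.iota x 0 c0 (W' i) = Defs.iota e 0 c0 i.
  move=> i. rewrite /W' pi_shift h4 mulr1. by rewrite addrK.
have hb : forall r : nat, (r <= e)%N -> 0 <= W' r%:Z <= x%:Z.
  move=> r hr. apply: pi0P. rewrite hpi iota_on //.
have [hw hwE] := restrictP hW' hb.
set w := fun r => absz (W' r%:Z).
have Ww : forall i, (i <= e)%N -> W' i%:Z = (w i)%:Z.
  move=> i hi. by rewrite -hwE iota_on.
exists w. split; first exact: hw.
split.
  move=> i hi. have := h1 i%:Z. rewrite !iota_on //.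
  have := Ww (f i) ((proj2 hf) i hi). rewrite /W' => hh.
  have -> : W (f i)%:Z = (w (f i))%:Z + k4 * (x.+1)%:Z by rewrite -hh mulNr addrNK.
  rewrite -addrA -mulrDl => h'.
  apply/esym. apply: (small_eq _ _ h'). exact: (proj2 hu). apply: (proj2 hw). exact: (proj2 hf).
split.
  move=> i hi. have := h2 i%:Z. rewrite !iota_on //.
  have := Ww (g i) ((proj2 hg) i hi). rewrite /W' => hh.
  have -> : W (g i)%:Z = (w (g i))%:Z + k4 * (x.+1)%:Z by rewrite -hh mulNr addrNK.
  rewrite -addrA -mulrDl => h'.
  apply/esym. apply: (small_eq _ _ h'). exact: (proj2 hv). apply: (proj2 hw). exact: (proj2 hg).
move=> w2 hw2 fw2 gw2.
have L1 : LEq x (fun i => Defs.iota e x w2 (Defs.iota b e f i)) (Defs.iota b x u).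
  apply: LEq_ext => i. rewrite -iota_comp //. exact: iota_heq.
have L2 : LEq x (fun i => Defs.iota e x w2 (Defs.iota d e g i)) (Defs.iota d x v).
  apply: LEq_ext => i. rewrite -iota_comp //. exact: iota_heq.
have [k3 hk3] := hU _ (iota_valid hw2) L1 L2.
move=> i hi.
have := Ww i hi. rewrite /W' hk3 iota_on // -addrA -mulrDl => h.
apply/esym; apply: (small_eq _ _ (esym h)). exact: (proj2 hw). exact: (proj2 hw2).
Qed.

Lemma pb_D2L a b d e p q f g : dval a b p -> dval a d q -> dval b e f -> dval d e g ->
  DPB a b d e p q f g ->
  LPB a b d e (Defs.iota a b p) (Defs.iota a d q) (Defs.iota b e f) (Defs.iota d e g).
Proof.
move=> hp hq hf hg [comm Du].
have icomm := @iota_commute a b d e p q f g hp hq comm.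
split; first by apply: LEq_ext.
move=> x U V hU hV [k hk].
set h := fun i => Defs.iota b 0 c0 (U i).
have hh : lval x 0 h := lval_comp hU (iota_valid (c0_valid b)).
have [j hj] := @jumpP h x (proj1 hh) (proj2 hh).
set c := h j.
set U1 := fun i => U (j + i) + (- c) * (b.+1)%:Z.
set V1 := fun i => V (j + i) + (- (c + k)) * (d.+1)%:Z.
have hU1 : lval x b U1 by apply: lval_addc; apply: lval_shiftarg.
have hV1 : lval x d V1 by apply: lval_addc; apply: lval_shiftarg.
have piV : forall i, Defs.iota d 0 c0 (V i) = h i + k.
  move=> i. rewrite (iota_pi _ hg) hk pi_shift -(iota_pi _ hf). by [].
have hb1 : forall r : nat, (r <= x)%N -> 0 <= U1 r%:Z <= b%:Z.
  move=> r hr. apply: pi0P. rewrite /U1 pi_shift. rewrite -/(h _) hj //. by rewrite addrN.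
have hb2 : forall r : nat, (r <= x)%N -> 0 <= V1 r%:Z <= d%:Z.
  move=> r hr. apply: pi0P. rewrite /V1 pi_shift piV hj //. by rewrite addrN.
have [hu1 hu1E] := restrictP hU1 hb1.
have [hv1 hv1E] := restrictP hV1 hb2.
set u1 := fun r => absz (U1 r%:Z).
set v1 := fun r => absz (V1 r%:Z).
have Uu : forall i, (i <= x)%N -> U1 i%:Z = (u1 i)%:Z by move=> i hi; rewrite -hu1E iota_on.
have Vv : forall i, (i <= x)%N -> V1 i%:Z = (v1 i)%:Z by move=> i hi; rewrite -hv1E iota_on.
have fU1 : forall i, Defs.iota b e f (U1 i) = Defs.iota d e g (V1 i).
  move=> i. rewrite /U1 /V1 (lval_shift (iota_valid hf)) (lval_shift (iota_valid hg)) hk.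
  ring.
have cone : DE x (fun i => f (u1 i)) (fun i => g (v1 i)).
  move=> i hi. have := fU1 i%:Z. rewrite Uu // Vv // !iota_on //.
    by case. exact: (proj2 hv1). exact: (proj2 hu1).
have [w [hw [pw [qw wU]]]] := Du x u1 v1 hu1 hv1 cone.
set W := fun i => Defs.iota x a w (- j + i).
have hW : lval x a W by apply: lval_shiftarg; apply: iota_valid.
have pW : forall i, Defs.iota a b p (W i) = U i + (- c) * (b.+1)%:Z.
  move=> i. rewrite /W -iota_comp // (@iota_heq x b (fun t => p (w t)) u1 pw) hu1E /U1.
  by rewrite addrA addrN add0r.
have qW : forall i, Defs.iota a d q (W i) = V i + (- (c + k)) * (d.+1)%:Z.
  move=> i. rewrite /W -iota_comp // (@iota_heq x d (fun t => q (w t)) v1 qw) hv1E /V1.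
  by rewrite addrA addrN add0r.
exists W. split; first exact: hW.
split. exists c => i. rewrite pW. ring.
split. exists (c + k) => i. rewrite qW. ring.
move=> W2 hW2 [k5 h5] [k6 h6].
have k56 : k6 = k5 + k.
  have := hk 0. rewrite h5 h6 (lval_shift (iota_valid hf) (Defs.iota a b p (W2 0)) k5) (lval_shift (iota_valid hg) (Defs.iota a d q (W2 0)) k6) icomm.
  move=> H. apply: (@mulN_eq0 _ _ e). rewrite mulrDl. lia.
set W3 := fun i => W2 (j + i) + (k5 - c) * (a.+1)%:Z.
have hW3 : lval x a W3 by apply: lval_addc; apply: lval_shiftarg.
have pW3 : forall i, Defs.iota a b p (W3 i) = U1 i.
  move=> i. rewrite /W3 (lval_shift (iota_valid hp)) /U1 h5. ring.
have qW3 : forall i, Defs.iota a d q (W3 i) = V1 i.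
  move=> i. rewrite /W3 (lval_shift (iota_valid hq)) /V1 h6 k56. ring.
have hb3 : forall r : nat, (r <= x)%N -> 0 <= W3 r%:Z <= a%:Z.
  move=> r hr. apply: pi0P. rewrite (iota_pi _ hp) pW3. apply/eqP. rewrite -hu1E -iota_pi //.
  by rewrite iota_on.
have [hw3 hw3E] := restrictP hW3 hb3.
set w3 := fun r => absz (W3 r%:Z).
have Ww3 : forall i, (i <= x)%N -> W3 i%:Z = (w3 i)%:Z by move=> i hi; rewrite -hw3E iota_on.
have e3 : DE x w3 w.
  apply: wU => // i hi.
    have := pW3 i%:Z. rewrite Ww3 // iota_on ?(proj2 hw3) // Uu //. by case.
  have := qW3 i%:Z. rewrite Ww3 // iota_on ?(proj2 hw3) // Vv //. by case.
exists (k5 - c) => i.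
rewrite /W (@iota_heq x a w w3); last by move=> t ht; rewrite e3.
by rewrite hw3E /W3 addrA addrN add0r.
Qed.

Lemma iota_on0 m n f : Defs.iota m n f 0 = (f 0%N)%:Z.
Proof. exact: (@iota_on m n f 0%N (leq0n m)). Qed.

Definition act (side : bool) (m n : nat) (f : nat -> nat) : Prop :=
  if side then f m = n else f 0%N = 0%N.

Lemma dval_of m n (F : int -> int) : (forall i j : int, i <= j -> F i <= F j) ->
  (forall r : nat, (r <= m)%N -> 0 <= F r%:Z <= n%:Z) ->
  dval m n (fun r => absz (F r%:Z)) /\ forall r : nat, (r <= m)%N -> (absz (F r%:Z))%:Z = F r%:Z.
Proof.
move=> hm hb.
have ab : forall r : nat, (r <= m)%N -> (absz (F r%:Z))%:Z = F r%:Z.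
  move=> r hr. rewrite gez0_abs //. by have /andP[] := hb r hr.
split => //. split.
  move=> i j hij hj. have hi : (i <= m)%N by apply: leq_trans hij hj.
  have := hm i%:Z j%:Z. rewrite -(ab i hi) -(ab j hj).
  move=> h. have := h ltac:(lia). lia.
move=> i hi. have := hb i hi. rewrite -(ab i hi). lia.
Qed.

Lemma po_D2L (side : bool) a b d e p q f g : dval a b p -> dval a d q -> dval b e f -> dval d e g ->
  act side a b p -> act side a d q -> act side b e f ->
  DPO a b d e p q f g ->
  LPO a b d e (Defs.iota a b p) (Defs.iota a d q) (Defs.iota b e f) (Defs.iota d e g).
Proof.
move=> hp hq hf hg ap aq af [comm Du].
have icomm := @iota_commute a b d e p q f g hp hq comm.
split; first by apply: LEq_ext.
move=> x U V hU hV [k hk].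
set V1 := fun i => V i + (- k) * (x.+1)%:Z.
have hV1 : lval d x V1 by apply: lval_addc.
have eV1 : forall i, V1 (Defs.iota a d q i) = U (Defs.iota a b p i).
  move=> i. rewrite /V1 hk. ring.
set c := if side then U b%:Z - (x.+1)%:Z else U 0.
have Um1 : U (-1) = U b%:Z - (x.+1)%:Z.
  have := (proj2 hU) (-1). have -> : -1 + (b.+1)%:Z = b%:Z by lia. move=> ->. ring.
have Vm1 : V1 (-1) = V1 d%:Z - (x.+1)%:Z.
  have := (proj2 hV1) (-1). have -> : -1 + (d.+1)%:Z = d%:Z by lia. move=> ->. ring.
have Ub : forall r : nat, (r <= b)%N -> c <= U r%:Z <= c + (x.+1)%:Z.
  move=> r hr. have m1 := (proj1 hU) (-1) r%:Z ltac:(lia).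
  have m2 := (proj1 hU) r%:Z b%:Z ltac:(lia).
  have m3 := (proj1 hU) 0 r%:Z ltac:(lia).
  have m4 := (proj1 hU) r%:Z (0 + (b.+1)%:Z) ltac:(lia).
  rewrite (proj2 hU) in m4.
  rewrite /c; case: side ap aq af {c} => _ _ _; lia.
have Vc : V1 (if side then d%:Z else 0) = U (if side then b%:Z else 0).
  case: side ap aq af {c Ub} => /= ap aq af.
    have := eV1 a%:Z. by rewrite !iota_on // ap aq.
  have := eV1 0. have -> : (0 : int) = (0%N)%:Z by []. by rewrite !iota_on // ap aq.
have Vb : forall r : nat, (r <= d)%N -> c <= V1 r%:Z <= c + (x.+1)%:Z.
  move=> r hr. have m1 := (proj1 hV1) (-1) r%:Z ltac:(lia).
  have m2 := (proj1 hV1) r%:Z d%:Z ltac:(lia).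
  have m3 := (proj1 hV1) 0 r%:Z ltac:(lia).
  have m4 := (proj1 hV1) r%:Z (0 + (d.+1)%:Z) ltac:(lia).
  rewrite (proj2 hV1) in m4.
  move: Vc. rewrite /c; case: side ap aq af {c Ub} => _ _ _ /= Vc; lia.
have [hu uE] := @dval_of b x.+1 (fun i => U i - c) ltac:(move=> i j hij; rewrite lerD2r; exact: (proj1 hU))
  ltac:(move=> r hr; have := Ub r hr; lia).
have [hv vE] := @dval_of d x.+1 (fun i => V1 i - c) ltac:(move=> i j hij; rewrite lerD2r; exact: (proj1 hV1))
  ltac:(move=> r hr; have := Vb r hr; lia).
set u := fun r => absz (U r%:Z - c).
set v := fun r => absz (V1 r%:Z - c).
have cone : DE a (fun i => u (p i)) (fun i => v (q i)).
  move=> i hi. apply/eqP. rewrite -eqz_nat /u /v uE ?(proj2 hp) // vE ?(proj2 hq) //.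
  have := eV1 i%:Z. rewrite !iota_on // => ->. by [].
have [w [hw [wf [wg wU]]]] := Du x.+1 u v hu hv cone.
set W := fun i => c + ext e (x.+1)%:Z w i.
have hW : lval e x W.
  split.
    move=> i j hij. rewrite lerD2l. apply: ext_mono => //; first exact: (proj1 hw).
    have := (proj2 hw) e (leqnn _). lia.
  move=> i. rewrite /W ext_shift1. ring.
have Wf : forall i, W (Defs.iota b e f i) = U i.
  move=> i. have [qq [r [hr [-> _]]]] := decompP b i.
  rewrite iotaE ext_qr // /W [(f r)%:Z + _]addrC ext_qr ?(proj2 hf) // wf //.
  rewrite uE // [_ * _ + _]addrC (lval_shift hU). ring.
have Wg : forall i, W (Defs.iota d e g i) = V1 i.
  move=> i. have [qq [r [hr [-> _]]]] := decompP d i.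
  rewrite iotaE ext_qr // /W [(g r)%:Z + _]addrC ext_qr ?(proj2 hg) // wg //.
  rewrite vE // [_ * _ + _]addrC (lval_shift hV1). ring.
exists W. split; first exact: hW.
split. exists 0 => i. rewrite Wf. ring.
split. exists k => i. rewrite Wg /V1. ring.
move=> W2 hW2 [k5 h5] [k6 h6].
have k56 : k6 = k5 + k.
  have := hk 0. rewrite h5 h6 -icomm. move=> H. apply: (@mulN_eq0 _ _ x). rewrite mulrDl. lia.
set W3 := fun i => W2 i + k5 * (x.+1)%:Z.
have hW3 : lval e x W3 by apply: lval_addc.
have W3f : forall i, W3 (Defs.iota b e f i) = U i by move=> i; rewrite /W3 h5.
have W3g : forall i, W3 (Defs.iota d e g i) = V1 i.
  move=> i; rewrite /W3 /V1 h6 k56. ring.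
have W3b : forall r : nat, (r <= e)%N -> c <= W3 r%:Z <= c + (x.+1)%:Z.
  move=> r hr. have m1 := (proj1 hW3) (-1) r%:Z ltac:(lia).
  have m2 := (proj1 hW3) r%:Z e%:Z ltac:(lia).
  have m3 := (proj1 hW3) 0 r%:Z ltac:(lia).
  have m4 := (proj1 hW3) r%:Z (0 + (e.+1)%:Z) ltac:(lia).
  rewrite (proj2 hW3) in m4.
  have m5 := (proj2 hW3) (-1). have ee : -1 + (e.+1)%:Z = e%:Z by lia. rewrite ee in m5.
  rewrite /c; case: side ap aq af {c Ub Vb Vc u v uE vE hu hv cone wf wg wU W hW Wf Wg} => /= ap aq af.
    have := W3f b%:Z. rewrite iota_on // af. lia.
  have := W3f 0. rewrite iota_on0 af => h. have h' : W3 0 = U 0 := h. lia.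
have [hw3 w3E] := @dval_of e x.+1 (fun i => W3 i - c) ltac:(move=> i j hij; rewrite lerD2r; exact: (proj1 hW3))
  ltac:(move=> r hr; have := W3b r hr; lia).
set w3 := fun r => absz (W3 r%:Z - c).
have e3 : DE e w3 w.
  apply: wU => // i hi; apply/eqP; rewrite -eqz_nat /w3.
    rewrite w3E ?(proj2 hf) // uE //. have := W3f i%:Z. rewrite iota_on // => ->. by [].
  rewrite w3E ?(proj2 hg) // vE //. have := W3g i%:Z. rewrite iota_on // => ->. by [].
have EQ : forall i, W3 i = W i.
  apply: (lval_eq hW3 hW). move=> r hr. rewrite /W ext_on // -e3 // /w3 w3E //. ring.
exists k5 => i. by rewrite -EQ.
Qed.

Definition liso (a b : nat) (al : int -> int) : Prop :=
  lval a b al /\ exists be, lval b a be /\ LEq a (fun i => be (al i)) (fun i => i) /\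
                            LEq b (fun i => al (be i)) (fun i => i).

Lemma LisoE a b al : @is_iso Lambda a b al = liso a b al. Proof. by []. Qed.

Lemma nat_inv (B A' B' : nat) (p p' aA aB bA bB : int -> int) :
  lval A' B' p' -> lval B' B bB ->
  LEq A' (fun i => aA (bA i)) (fun i => i) -> LEq B (fun i => bB (aB i)) (fun i => i) ->
  LEq B' (fun i => aB (p i)) (fun i => p' (aA i)) ->
  LEq B (fun i => bB (p' i)) (fun i => p (bA i)).
Proof.
move=> hp' hbB iA iB n.
have s1 : LEq B (fun i => bB (p' i)) (fun i => bB (p' (aA (bA i)))).
  have t : LEq B' p' (fun i => p' (aA (bA i))) := LEq_compl hp' (LEq_sym iA).
  exact: (LEq_compl hbB t).
have s2 : LEq B (fun i => bB (p' (aA (bA i)))) (fun i => bB (aB (p (bA i)))).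
  have t : LEq B' (fun i => p' (aA (bA i))) (fun i => aB (p (bA i))) := LEq_compr (LEq_sym n).
  exact: (LEq_compl hbB t).
have s3 : LEq B (fun i => bB (aB (p (bA i)))) (fun i => p (bA i)).
  exact: (LEq_compr (h := fun i => p (bA i)) iB).
exact: LEq_trans s1 (LEq_trans s2 s3).
Qed.

Lemma cancel_l (E E' : nat) (aE bE F G : int -> int) : lval E' E bE -> LEq E (fun i => bE (aE i)) (fun i => i) ->
  LEq E' (fun i => aE (F i)) (fun i => aE (G i)) -> LEq E F G.
Proof.
move=> hb iE h.
have s1 : LEq E F (fun i => bE (aE (F i))) by apply: LEq_sym; exact: (LEq_compr (h := F) iE).
have s2 : LEq E (fun i => bE (aE (F i))) (fun i => bE (aE (G i))) by exact: (LEq_compl hb h).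
have s3 : LEq E (fun i => bE (aE (G i))) G by exact: (LEq_compr (h := G) iE).
exact: LEq_trans s1 (LEq_trans s2 s3).
Qed.

Lemma iso_sq (A B D E A' B' D' E' : nat) (p q f g p' q' f' g' aA aB aD aE : int -> int) :
  lval A B p -> lval A D q -> lval B E f -> lval D E g ->
  lval A' B' p' -> lval A' D' q' -> lval B' E' f' -> lval D' E' g' ->
  liso A A' aA -> liso B B' aB -> liso D D' aD -> liso E E' aE ->
  LEq B' (fun i => aB (p i)) (fun i => p' (aA i)) ->
  LEq D' (fun i => aD (q i)) (fun i => q' (aA i)) ->
  LEq E' (fun i => aE (f i)) (fun i => f' (aB i)) ->
  LEq E' (fun i => aE (g i)) (fun i => g' (aD i)) ->
  (LPB A' B' D' E' p' q' f' g' -> LPB A B D E p q f g) /\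
  (LPO A' B' D' E' p' q' f' g' -> LPO A B D E p q f g).
Proof.
move=> hp hq hf hg hp' hq' hf' hg' [haA [bA [hbA [iA iA']]]] [haB [bB [hbB [iB iB']]]]
  [haD [bD [hbD [iD iD']]]] [haE [bE [hbE [iE iE']]]] np nq nf ng.
have ip := nat_inv hp' hbB iA' iB np.
have iq := nat_inv hq' hbD iA' iD nq.
have if_ := nat_inv hf' hbE iB' iE nf.
have ig := nat_inv hg' hbE iD' iE ng.
have commT : LEq E' (fun i => f' (p' i)) (fun i => g' (q' i)) ->
             LEq E (fun i => f (p i)) (fun i => g (q i)).
  move=> c'. apply: (cancel_l hbE iE).
  have s1 : LEq E' (fun i => aE (f (p i))) (fun i => f' (aB (p i))) := LEq_compr nf.
  have s2 : LEq E' (fun i => f' (aB (p i))) (fun i => f' (p' (aA i))) := LEq_compl hf' np.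
  have s3 : LEq E' (fun i => f' (p' (aA i))) (fun i => g' (q' (aA i))) := LEq_compr c'.
  have s4 : LEq E' (fun i => g' (q' (aA i))) (fun i => g' (aD (q i))) := LEq_compl hg' (LEq_sym nq).
  have s5 : LEq E' (fun i => g' (aD (q i))) (fun i => aE (g (q i))) := LEq_compr (LEq_sym ng).
  exact: LEq_trans s1 (LEq_trans s2 (LEq_trans s3 (LEq_trans s4 s5))).
split.
- move=> [c' U']. split; first exact: commT.
  move=> X u v hu hv huv.
  have hu' : lval X B' (fun i => aB (u i)) := lval_comp hu haB.
  have hv' : lval X D' (fun i => aD (v i)) := lval_comp hv haD.
  have huv' : LEq E' (fun i => f' (aB (u i))) (fun i => g' (aD (v i))).
    have s1 : LEq E' (fun i => f' (aB (u i))) (fun i => aE (f (u i))) := LEq_compr (LEq_sym nf).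
    have s2 : LEq E' (fun i => aE (f (u i))) (fun i => aE (g (v i))) := LEq_compl haE huv.
    have s3 : LEq E' (fun i => aE (g (v i))) (fun i => g' (aD (v i))) := LEq_compr ng.
    exact: LEq_trans s1 (LEq_trans s2 s3).
  have [w' [hw' [Hp [Hq Hu]]]] := U' X _ _ hu' hv' huv'.
  exists (fun i => bA (w' i)). split; first exact: lval_comp hw' hbA.
  split.
    have s1 : LEq B (fun i => p (bA (w' i))) (fun i => bB (p' (w' i))) := LEq_compr (LEq_sym ip).
    have s2 : LEq B (fun i => bB (p' (w' i))) (fun i => bB (aB (u i))) := LEq_compl hbB Hp.
    have s3 : LEq B (fun i => bB (aB (u i))) u := LEq_compr iB.
    exact: LEq_trans s1 (LEq_trans s2 s3).
  split.
    have s1 : LEq D (fun i => q (bA (w' i))) (fun i => bD (q' (w' i))) := LEq_compr (LEq_sym iq).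
    have s2 : LEq D (fun i => bD (q' (w' i))) (fun i => bD (aD (v i))) := LEq_compl hbD Hq.
    have s3 : LEq D (fun i => bD (aD (v i))) v := LEq_compr iD.
    exact: LEq_trans s1 (LEq_trans s2 s3).
  move=> w2 hw2 Hp2 Hq2.
  have H1 : LEq B' (fun i => p' (aA (w2 i))) (fun i => aB (u i)).
    have s1 : LEq B' (fun i => p' (aA (w2 i))) (fun i => aB (p (w2 i))) := LEq_compr (LEq_sym np).
    exact: LEq_trans s1 (LEq_compl haB Hp2).
  have H2 : LEq D' (fun i => q' (aA (w2 i))) (fun i => aD (v i)).
    have s1 : LEq D' (fun i => q' (aA (w2 i))) (fun i => aD (q (w2 i))) := LEq_compr (LEq_sym nq).
    exact: LEq_trans s1 (LEq_compl haD Hq2).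
  have H3 := Hu _ (lval_comp hw2 haA) H1 H2.
  have s1 : LEq A w2 (fun i => bA (aA (w2 i))) := LEq_sym (LEq_compr iA).
  exact: LEq_trans s1 (LEq_compl hbA H3).
- move=> [c' U']. split; first exact: commT.
  move=> X u v hu hv huv.
  have hu' : lval B' X (fun i => u (bB i)) := lval_comp hbB hu.
  have hv' : lval D' X (fun i => v (bD i)) := lval_comp hbD hv.
  have huv' : LEq X (fun i => u (bB (p' i))) (fun i => v (bD (q' i))).
    have s1 : LEq X (fun i => u (bB (p' i))) (fun i => u (p (bA i))) := LEq_compl hu ip.
    have s2 : LEq X (fun i => u (p (bA i))) (fun i => v (q (bA i))) := LEq_compr huv.
    have s3 : LEq X (fun i => v (q (bA i))) (fun i => v (bD (q' i))) := LEq_compl hv (LEq_sym iq).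
    exact: LEq_trans s1 (LEq_trans s2 s3).
  have [w' [hw' [Hf [Hg Hu]]]] := U' X _ _ hu' hv' huv'.
  exists (fun i => w' (aE i)). split; first exact: lval_comp haE hw'.
  split.
    have s1 : LEq X (fun i => w' (aE (f i))) (fun i => w' (f' (aB i))) := LEq_compl hw' nf.
    have s2 : LEq X (fun i => w' (f' (aB i))) (fun i => u (bB (aB i))) := LEq_compr Hf.
    have s3 : LEq X (fun i => u (bB (aB i))) u := LEq_compl hu iB.
    exact: LEq_trans s1 (LEq_trans s2 s3).
  split.
    have s1 : LEq X (fun i => w' (aE (g i))) (fun i => w' (g' (aD i))) := LEq_compl hw' ng.
    have s2 : LEq X (fun i => w' (g' (aD i))) (fun i => v (bD (aD i))) := LEq_compr Hg.
    have s3 : LEq X (fun i => v (bD (aD i))) v := LEq_compl hv iD.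
    exact: LEq_trans s1 (LEq_trans s2 s3).
  move=> w2 hw2 Hf2 Hg2.
  have H1 : LEq X (fun i => w2 (bE (f' i))) (fun i => u (bB i)).
    have s1 : LEq X (fun i => w2 (bE (f' i))) (fun i => w2 (f (bB i))) := LEq_compl hw2 if_.
    exact: LEq_trans s1 (LEq_compr Hf2).
  have H2 : LEq X (fun i => w2 (bE (g' i))) (fun i => v (bD i)).
    have s1 : LEq X (fun i => w2 (bE (g' i))) (fun i => w2 (g (bD i))) := LEq_compl hw2 ig.
    exact: LEq_trans s1 (LEq_compr Hg2).
  have H3 := Hu _ (lval_comp hbE hw2) H1 H2.
  have s1 : LEq X w2 (fun i => w2 (bE (aE i))) := LEq_sym (LEq_compl hw2 iE).
  exact: LEq_trans s1 (LEq_compr H3).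
Qed.

Section Cubes.
Variable S : finType.

Lemma sub1 (T : {set S}) s s' : s |: T \subset s |: (s' |: T).
Proof. apply: setUS. exact: subsetU1. Qed.
Lemma sub2 (T : {set S}) s s' : s' |: T \subset s |: (s' |: T).
Proof. exact: subsetU1. Qed.
Lemma sub3 (T : {set S}) s : T \subset s |: T.
Proof. exact: subsetU1. Qed.

Lemma LcubeV (Q : cube Lambda S) : is_cube Q -> forall T U : {set S}, T \subset U ->
  lval (cob Q U) (cob Q T) (cmor Q T U).
Proof. by case. Qed.

Lemma DcubeV (P : cube Delta S) : is_cube P -> forall T U : {set S}, T \subset U ->
  dval (cob P U) (cob P T) (cmor P T U).
Proof. by case. Qed.

Lemma is_cube_image (P : cube Delta S) : is_cube P -> is_cube (cube_image P).
Proof.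
move=> [hv [hid hc]]. split; last split.
- move=> T U hTU. exact: iota_valid (hv T U hTU).
- move=> T. apply: LEq_ext => i /=. rewrite (@iota_heq _ _ _ _ (hid T)). by rewrite iota_id.
- move=> T U V hTU hUV. apply: LEq_ext => i /=.
  rewrite -iota_comp; last exact: hv. apply: iota_heq => t ht. by rewrite (hc T U V hTU hUV t ht).
Qed.

Lemma sbc_L2D (P : cube Delta S) : is_cube P ->
  strongly_biCartesian (cube_image P) -> strongly_biCartesian P.
Proof.
move=> hP H T s s' hss hs hs'. have [pb po] := H T s s' hss hs hs'.
have V := DcubeV hP.
split.
- apply: pb_L2D pb; apply: V; [exact: sub1|exact: sub2|exact: sub3|exact: sub3].
- apply: po_L2D po; apply: V; [exact: sub1|exact: sub2|exact: sub3|exact: sub3].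
Qed.

Definition active_cube (side : bool) (P : cube Delta S) : Prop :=
  forall T U : {set S}, T \subset U -> act side (cob P U) (cob P T) (cmor P T U).

Lemma sbc_D2L side (P : cube Delta S) : is_cube P -> active_cube side P ->
  strongly_biCartesian P -> strongly_biCartesian (cube_image P).
Proof.
move=> hP ha H T s s' hss hs hs'. have [pb po] := H T s s' hss hs hs'.
have V := DcubeV hP.
split.
- exact: (pb_D2L (V _ _ (sub1 T s s')) (V _ _ (sub2 T s s')) (V _ _ (sub3 T s)) (V _ _ (sub3 T s')) pb).
- exact: (po_D2L (V _ _ (sub1 T s s')) (V _ _ (sub2 T s s')) (V _ _ (sub3 T s)) (V _ _ (sub3 T s'))
     (ha _ _ (sub1 T s s')) (ha _ _ (sub2 T s s')) (ha _ _ (sub3 T s)) po).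
Qed.

Lemma sbc_iso1 (Q Q' : cube Lambda S) (al : forall T : {set S}, int -> int) :
  is_cube Q -> is_cube Q' ->
  (forall T, liso (cob Q T) (cob Q' T) (al T)) ->
  (forall T U : {set S}, T \subset U ->
     LEq (cob Q' T) (fun i => al T (cmor Q T U i)) (fun i => cmor Q' T U (al U i))) ->
  strongly_biCartesian Q' -> strongly_biCartesian Q.
Proof.
move=> hQ hQ' hiso hnat H T s s' hss hs hs'. have [pb po] := H T s s' hss hs hs'.
have V := LcubeV hQ. have V' := LcubeV hQ'.
have := @iso_sq _ _ _ _ _ _ _ _ _ _ _ _ _ _ _ _ (al (s |: (s' |: T))) (al (s |: T)) (al (s' |: T)) (al T)
  (V _ _ (sub1 T s s')) (V _ _ (sub2 T s s')) (V _ _ (sub3 T s)) (V _ _ (sub3 T s'))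
  (V' _ _ (sub1 T s s')) (V' _ _ (sub2 T s s')) (V' _ _ (sub3 T s)) (V' _ _ (sub3 T s'))
  (hiso _) (hiso _) (hiso _) (hiso _)
  (hnat _ _ (sub1 T s s')) (hnat _ _ (sub2 T s s')) (hnat _ _ (sub3 T s)) (hnat _ _ (sub3 T s')).
move=> [h1 h2]. split; [exact: h1 | exact: h2].
Qed.

Lemma sbc_iso (Q Q' : cube Lambda S) : is_cube Q -> is_cube Q' -> cube_iso Q Q' ->
  (strongly_biCartesian Q <-> strongly_biCartesian Q').
Proof.
move=> hQ hQ' [al [hiso hnat]]. split; last exact: sbc_iso1 hiso hnat.
move=> H T s s' hss hs hs'.
have V := LcubeV hQ. have V' := LcubeV hQ'.
have inv : forall X : {set S}, exists be, liso (cob Q' X) (cob Q X) be /\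
    LEq (cob Q X) (fun i => be (al X i)) (fun i => i) /\ LEq (cob Q' X) (fun i => al X (be i)) (fun i => i).
  move=> X. have [ha [be [hb [i1 i2]]]] := hiso X. exists be. split => //.
  split => //. exists (al X). by split.
have nb : forall X Y : {set S}, X \subset Y -> forall bX bY,
    liso (cob Q' X) (cob Q X) bX -> liso (cob Q' Y) (cob Q Y) bY ->
    LEq (cob Q Y) (fun i => bY (al Y i)) (fun i => i) ->
    LEq (cob Q' Y) (fun i => al Y (bY i)) (fun i => i) ->
    LEq (cob Q X) (fun i => bX (al X i)) (fun i => i) ->
    LEq (cob Q X) (fun i => bX (cmor Q' X Y i)) (fun i => cmor Q X Y (bY i)).
  move=> X Y hXY bX bY [hbX _] [hbY _] iY iY' iX.
  exact: (nat_inv (V' _ _ hXY) hbX iY' iX (hnat _ _ hXY)).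
have [bA [lA [iA iA']]] := inv (s |: (s' |: T)).
have [bB [lB [iB iB']]] := inv (s |: T).
have [bD [lD [iD iD']]] := inv (s' |: T).
have [bE [lE [iE iE']]] := inv T.
have [pb po] := H T s s' hss hs hs'.
have := @iso_sq _ _ _ _ _ _ _ _ _ _ _ _ _ _ _ _ bA bB bD bE
  (V' _ _ (sub1 T s s')) (V' _ _ (sub2 T s s')) (V' _ _ (sub3 T s)) (V' _ _ (sub3 T s'))
  (V _ _ (sub1 T s s')) (V _ _ (sub2 T s s')) (V _ _ (sub3 T s)) (V _ _ (sub3 T s'))
  lA lB lD lE
  (nb _ _ (sub1 T s s') _ _ lB lA iA iA' iB) (nb _ _ (sub2 T s s') _ _ lD lA iA iA' iD)
  (nb _ _ (sub3 T s) _ _ lE lB iB iB' iE) (nb _ _ (sub3 T s') _ _ lE lD iD iD' iE).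
move=> [h1 h2]. split; [exact: h1 | exact: h2].
Qed.

End Cubes.

Definition cong (M : int) (a b : int) : Prop := exists k : int, a = b + k * M.

Lemma cong_refl M a : cong M a a. Proof. exists 0. by rewrite mul0r addr0. Qed.
Lemma cong_sym M a b : cong M a b -> cong M b a.
Proof. move=> [k ->]; exists (- k). rewrite mulNr. by rewrite addrK. Qed.
Lemma cong_trans M a b c : cong M a b -> cong M b c -> cong M a c.
Proof. move=> [k1 ->] [k2 ->]; exists (k2 + k1). rewrite mulrDl. by rewrite addrA. Qed.
Lemma cong_lval m n F a b : lval m n F -> cong (m.+1)%:Z a b -> cong (n.+1)%:Z (F a) (F b).
Proof. move=> hF [k ->]; exists k. by rewrite (lval_shift hF). Qed.

Definition nb (side : bool) (y : int) : int := if side then y + 1 else y - 1.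
Definition jmp (side : bool) (G : int -> int) (y : int) : Prop := G (nb side y) <> G y.

Lemma nb_shift side y c : nb side (y + c) = nb side y + c.
Proof. rewrite /nb; case: side; ring. Qed.

Lemma jmp_shift side m m' G y k : lval m m' G -> jmp side G y -> jmp side G (y + k * (m.+1)%:Z).
Proof. move=> hG hj. rewrite /jmp nb_shift !(lval_shift hG) => /addIr. exact: hj. Qed.

Lemma jmp_cong side m m' G y y' : lval m m' G -> cong (m.+1)%:Z y' y -> jmp side G y -> jmp side G y'.
Proof. move=> hG [k e] hj; rewrite e. exact: (jmp_shift hG hj). Qed.

Lemma jmp_const side G G' (c : int) y : (forall i, G' i = G i + c) -> jmp side G y -> jmp side G' y.
Proof. move=> h hj. rewrite /jmp !h => /addIr. exact: hj. Qed.

Lemma jmp_factor side (G H : int -> int) y : jmp side (fun i => G (H i)) y -> jmp side H y.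
Proof. move=> hj e. apply: hj. by rewrite /= e. Qed.

Lemma exists_jump side m m' G : lval m m' G -> exists y, jmp side G y.
Proof.
move=> hG.
have gen : forall k : nat, G 0 < G k%:Z -> exists t : nat, G t%:Z < G (t.+1)%:Z.
  elim=> [|k IH] H; first by have : G 0 = G 0%:Z by []; lia.
  case: (lerP (G k.+1%:Z) (G k%:Z)) => H1.
    have [t ht] := IH ltac:(lia). by exists t.
  by exists k.
have [t ht] : exists t : nat, G t%:Z < G (t.+1)%:Z.
  apply: (gen m.+1). have := (proj2 hG) 0. rewrite add0r => ->. by rewrite ltrDl.
have e1 : (t.+1)%:Z = t%:Z + 1 by lia.
case: side.
  exists t%:Z. rewrite /jmp /nb -e1. lia.
exists (t.+1)%:Z. rewrite /jmp /nb. have : G ((t.+1)%:Z - 1) = G t%:Z by rewrite e1 addrK. lia.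
Qed.

Lemma sq_jump side (A B E : nat) (p f : int -> int) (x : int) : lval A B p -> lval B E f ->
  jmp side (fun i => f (p i)) x ->
  (f (nb side (p x)) = f (p x) -> exists aa, cong (B.+1)%:Z (p aa) (nb side (p x))) ->
  jmp side f (p x).
Proof.
move=> hp hf hj hex e. have [aa [k hk]] := hex e.
set a2 := aa + (- k) * (A.+1)%:Z.
have pa2 : p a2 = nb side (p x) by rewrite /a2 (lval_shift hp) hk; ring.
apply: hj. rewrite /=. move: e. rewrite -pa2 => e.
clear hex hk. case: side pa2 e => /= pa2 e.
- have lt : x < a2.
    case: (lerP a2 x) => // h. have := (proj1 hp) _ _ h. lia.
  have m1 := (proj1 hp) (x + 1) a2 ltac:(lia).
  have m2 := (proj1 hf) _ _ m1.
  have m3 := (proj1 hf) _ _ ((proj1 hp) x (x + 1) ltac:(lia)).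
  lia.
- have lt : a2 < x.
    case: (lerP x a2) => // h. have := (proj1 hp) _ _ h. lia.
  have m1 := (proj1 hp) a2 (x - 1) ltac:(lia).
  have m2 := (proj1 hf) _ _ m1.
  have m3 := (proj1 hf) _ _ ((proj1 hp) (x - 1) x ltac:(lia)).
  lia.
Qed.

Lemma pb_point a b d e p q f g : lval b e f -> lval d e g -> LPB a b d e p q f g ->
  forall bb dd, cong (e.+1)%:Z (f bb) (g dd) ->
  exists aa, cong (b.+1)%:Z (p aa) bb /\ cong (d.+1)%:Z (q aa) dd.
Proof.
move=> hf hg [_ U] bb dd [k hk].
have hu : lval 0 b (fun i => bb + i * (b.+1)%:Z).
  split; first by move=> i j hij; rewrite lerD2l ler_pM2r.
  move=> i. rewrite mulrDl mul1r. by rewrite addrA.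
have hv : lval 0 d (fun i => dd + i * (d.+1)%:Z).
  split; first by move=> i j hij; rewrite lerD2l ler_pM2r.
  move=> i. rewrite mulrDl mul1r. by rewrite addrA.
have huv : LEq e (fun i => f (bb + i * (b.+1)%:Z)) (fun i => g (dd + i * (d.+1)%:Z)).
  exists (- k) => i. rewrite (lval_shift hf) (lval_shift hg) hk. ring.
have [w [_ [[k1 h1] [[k2 h2] _]]]] := U 0%N _ _ hu hv huv.
exists (w 0). split.
  exists (- k1). have := h1 0. rewrite mul0r addr0 => ->. ring.
exists (- k2). have := h2 0. rewrite mul0r addr0 => ->. ring.
Qed.

Section Construct.
Variable S : finType.
Variable Q : cube Lambda S.
Hypothesis hQ : is_cube Q.
Hypothesis hpb : forall (T : {set S}) s s', s != s' -> s \notin T -> s' \notin T ->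
  LPB (cob Q (s |: (s' |: T))) (cob Q (s |: T)) (cob Q (s' |: T)) (cob Q T)
      (cmor Q (s |: T) (s |: (s' |: T))) (cmor Q (s' |: T) (s |: (s' |: T)))
      (cmor Q T (s |: T)) (cmor Q T (s' |: T)).

Local Notation F := (cmor Q).
Local Notation n := (cob Q).
Local Notation NN T := ((cob Q T).+1)%:Z.

Lemma FV (T U : {set S}) : T \subset U -> lval (n U) (n T) (F T U).
Proof. exact: (@LcubeV S Q hQ T U). Qed.

Lemma Fid (T : {set S}) : exists k : int, forall i, F T T i = i + k * NN T.
Proof.
have [_ [hid _]] := hQ. have [k hk] := hid T. exists (- k) => i.
have e := hk i. simpl in e. rewrite mulNr. lia.
Qed.

Lemma Fcomp (T U V : {set S}) : T \subset U -> U \subset V ->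
  exists k : int, forall i, F T U (F U V i) = F T V i + k * NN T.
Proof. have [_ [_ hc]] := hQ. move=> h1 h2. exact: (hc T U V h1 h2). Qed.

Lemma cong_id (T : {set S}) i : cong (NN T) (F T T i) i.
Proof. have [k hk] := Fid T. exists k. exact: hk. Qed.

Lemma cong_comp (T U V : {set S}) i : T \subset U -> U \subset V ->
  cong (NN T) (F T U (F U V i)) (F T V i).
Proof. move=> h1 h2. have [k hk] := Fcomp h1 h2. exists k. exact: hk. Qed.

Lemma PB0g : forall (k : nat) (T U : {set S}) (s' : S), #|U| = (#|T| + k)%N -> T \subset U -> s' \notin U ->
  forall bb dd, cong (NN T) (F T U bb) (F T (s' |: T) dd) ->
  exists aa, cong (NN U) (F U (s' |: U) aa) bb /\ cong (NN (s' |: T)) (F (s' |: T) (s' |: U) aa) dd.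
Proof.
elim=> [|k IH] T U s' hc hTU hs' bb dd hbd.
  have eTU : T = U. apply/eqP. rewrite eqEcard hTU hc addn0 leqnn. by [].
  subst U. exists dd. split; last exact: cong_id.
  apply: cong_trans (cong_sym hbd) (cong_id _ _).
have [s hsU hsT] : exists2 s, s \in U & s \notin T.
  have : T \proper U by rewrite properEcard hTU hc; apply/andP; split => //; lia.
  by move/properP => [_ [s h1 h2]]; exists s.
set W := U :\ s.
have hcW : #|W| = (#|T| + k)%N.
  have := cardsD1 s U. rewrite hsU hc /W. lia.
have hTW : T \subset W by rewrite subsetD1 hTU hsT.
have hWU : W \subset U by apply: subD1set.
have hs'W : s' \notin W by apply: contra hs'; apply: (subsetP hWU).
have hsW : s \notin W by rewrite /W setD11.
have hss : s != s' by apply: contraNneq hs' => <-.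
have eU : U = s |: W by rewrite /W setD1K.
have hb' : cong (NN T) (F T W (F W U bb)) (F T (s' |: T) dd).
  exact: cong_trans (cong_comp _ hTW hWU) hbd.
have [a' [ha1 ha2]] := IH T W s' hcW hTW hs'W (F W U bb) dd hb'.
have sq := hpb hss hsW hs'W.
clearbody W. subst U. rewrite setUCA.
have [aa [hA1 hA2]] := pb_point (FV (sub3 W s)) (FV (sub3 W s')) sq (cong_sym ha1).
exists aa. split => //.
have sub4 : s' |: T \subset s' |: W by apply: setUS.
apply: cong_trans (cong_sym (cong_comp _ sub4 (sub2 W s s'))) _.
apply: cong_trans (cong_lval (FV sub4) hA2) ha2.
Qed.

Section WithY.
Variable side : bool.
Variable y : int.
Hypothesis hy : jmp side (F set0 setT) y.

Definition xx (T : {set S}) : int := F T setT y.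

Lemma jmp_all : forall (k : nat) (U : {set S}), (#|U| + k)%N = #|S| ->
  forall T : {set S}, T \subset U -> jmp side (F T U) (xx U).
Proof.
elim=> [|k IH] U hc T hTU.
  have eU : U = setT by apply/eqP; rewrite eqEcard subsetT cardsT -hc addn0 leqnn.
  subst U. rewrite /xx.
  apply: (jmp_cong (FV hTU) (cong_id _ y)).
  apply: (@jmp_factor side (F set0 T)).
  have [c hc'] := Fcomp (sub0set T) hTU.
  exact: (jmp_const hc' hy).
have [s' hs'] : exists s', s' \notin U.
  have : U \proper setT by rewrite properEcard subsetT cardsT -hc; lia.
  by move/properP => [_ [s h1 h2]]; exists s.
set U' := s' |: U.
have hc' : (#|U'| + k)%N = #|S| by rewrite /U' cardsU1 hs' -hc; lia.
have hUU' : U \subset U' by apply: subsetU1.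
have hTU' : T \subset U' by apply: subset_trans hTU hUU'.
have IH1 := IH U' hc' T hTU'.
have e1 : cong (NN U) (F U U' (xx U')) (xx U) by rewrite /xx; apply: cong_comp => //; exact: subsetT.
apply: (jmp_cong (FV hTU) (cong_sym e1)).
apply: (sq_jump (FV hUU') (FV hTU)).
  have [c hc2] := Fcomp hTU hUU'. exact: (jmp_const hc2 IH1).
move=> e.
have hcard : #|U| = (#|T| + (#|U| - #|T|))%N.
  have := subset_leq_card hTU. lia.
have sub4 : s' |: T \subset U' by apply: setUS.
have HC : cong (NN T) (F T U (nb side (F U U' (xx U')))) (F T (s' |: T) (F (s' |: T) U' (xx U'))).
  rewrite e.
  apply: cong_trans (cong_comp _ hTU hUU') _.
  apply: cong_sym. exact: (cong_comp _ (sub3 T s') sub4).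
have [aa [h1 _]] := PB0g hcard hTU hs' HC.
by exists aa.
Qed.

Definition zz (T : {set S}) : int := if side then xx T - (n T)%:Z else xx T.
Definition KK (T U : {set S}) : int := F T U (xx U) - xx T.
Definition gg (T U : {set S}) (i : nat) : nat := absz ((F T U (zz U + i%:Z) - zz T) %% NN T)%Z.

Lemma jmpTU (T U : {set S}) : T \subset U -> jmp side (F T U) (xx U).
Proof.
move=> hTU. apply: (jmp_all (k := (#|S| - #|U|)%N)) => //.
have := max_card U. lia.
Qed.

Lemma KKc (T U : {set S}) : T \subset U -> exists ka : int, KK T U = ka * NN T.
Proof.
move=> hTU. have [k hk] := cong_comp y hTU (subsetT U). exists k.
rewrite /KK /xx hk. ring.
Qed.

Lemma window (T U : {set S}) : T \subset U -> forall i : nat, (i <= n U)%N ->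
  KK T U <= F T U (zz U + i%:Z) - zz T <= KK T U + (n T)%:Z.
Proof.
move=> hTU i hi. have hF := FV hTU. have jm := jmpTU hTU.
rewrite /KK /zz. move: jm. rewrite /jmp /nb.
set x := xx U. set xT := xx T.
case: side => jm.
- have m0 := (proj1 hF) x (x + 1) ltac:(lia).
  have m1 := (proj1 hF) (x - (n U)%:Z + i%:Z) x ltac:(lia).
  have m2 := (proj1 hF) (x + 1 - ((n U).+1)%:Z) (x - (n U)%:Z + i%:Z) ltac:(lia).
  have e2 := (proj2 hF) (x + 1 - ((n U).+1)%:Z). rewrite subrK in e2.
  lia.
- have m0 := (proj1 hF) (x - 1) x ltac:(lia).
  have m1 := (proj1 hF) x (x + i%:Z) ltac:(lia).
  have m2 := (proj1 hF) (x + i%:Z) (x - 1 + ((n U).+1)%:Z) ltac:(lia).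
  rewrite (proj2 hF) in m2.
  lia.
Qed.

Lemma ggE (T U : {set S}) : T \subset U -> forall i : nat, (i <= n U)%N ->
  (gg T U i)%:Z = F T U (zz U + i%:Z) - zz T - KK T U.
Proof.
move=> hTU i hi. have [ka hka] := KKc hTU. have hw := window hTU hi.
set v := F T U (zz U + i%:Z) - zz T.
have hr : (absz (v - KK T U) <= n T)%N by lia.
have ev : v = ka * NN T + (absz (v - KK T U))%:Z.
  rewrite gez0_abs; last by lia. rewrite -hka. ring.
rewrite /gg -/v ev. have [_ ->] := divmod_qr ka hr. rewrite gez0_abs; last by lia.
rewrite hka. ring.
Qed.

Definition PP : cube Delta S := @Cube Delta S (cob Q) gg.

Lemma gg_valid (T U : {set S}) : T \subset U -> dval (n U) (n T) (gg T U).
Proof.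
move=> hTU. split.
  move=> i j hij hj. have hi : (i <= n U)%N by apply: leq_trans hij hj.
  have := ggE hTU hi. have := ggE hTU hj.
  have := (proj1 (FV hTU)) (zz U + i%:Z) (zz U + j%:Z) ltac:(lia). lia.
move=> i hi. have := ggE hTU hi. have := window hTU hi. lia.
Qed.

Lemma PP_cube : is_cube PP.
Proof.
split; last split.
- move=> T U hTU. exact: gg_valid.
- move=> T i hi. rewrite /= /gg. have [k hk] := Fid T.
  have -> : F T T (zz T + i%:Z) - zz T = k * NN T + i%:Z by rewrite hk; ring.
  by have [_ ->] := divmod_qr k hi.
- move=> T U V hTU hUV i hi. rewrite /=.
  have hTV := subset_trans hTU hUV.
  have hi' : (gg U V i <= n U)%N by apply: (proj2 (gg_valid hUV)).
  have E1 := ggE hTV hi. have E2 := ggE hTU hi'. have E3 := ggE hUV hi.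
  have [k1 hk1] := KKc hUV. have [k2 hk2] := KKc hTU. have [k3 hk3] := KKc hTV.
  have [c hc] := Fcomp hTU hUV.
  have e4 : zz U + (gg U V i)%:Z = F U V (zz V + i%:Z) + (- k1) * NN U by rewrite E3 hk1; ring.
  rewrite e4 (lval_shift (FV hTU)) hc in E2.
  apply: (small_eq (k := - k3 - c + k1 + k2) _ _ (_ : _ = _)).
  + exact: (proj2 (gg_valid hTV)).
  + exact: (proj2 (gg_valid hTU)).
  + rewrite E1 E2 hk2 hk3. ring.
Qed.

Lemma PP_active : active_cube side PP.
Proof.
move=> T U hTU. rewrite /act /=. have hF := FV hTU.
case hs: side.
- apply/eqP. rewrite -eqz_nat ggE //. rewrite /KK /zz hs subrK. by apply/eqP; ring.
- apply/eqP. rewrite -eqz_nat (ggE hTU (leq0n _)). rewrite /KK /zz hs addr0. by apply/eqP; ring.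
Qed.

Lemma PP_iso : cube_iso Q (cube_image PP).
Proof.
exists (fun T i => i - zz T). split.
  move=> T. split; first exact: lval_rot.
  exists (fun i => i + zz T). split; first exact: lval_rot.
  split; apply: LEq_ext => i /=; ring.
move=> T U hTU. have [ka hka] := KKc hTU. exists (- ka) => i.
rewrite /=. have [q [r [hr [e _]]]] := decompP (n U) (i - zz U).
rewrite e iotaE ext_qr // ggE //.
have ei : i = (zz U + r%:Z) + q * NN U by rewrite -addrA [r%:Z + _]addrC -e; ring.
rewrite ei (lval_shift (FV hTU)) hka. ring.
Qed.

Lemma construct_y : exists P : cube Delta S, is_cube P /\ active_cube side P /\ cube_iso Q (cube_image P).
Proof. exists PP. split; first exact: PP_cube. split; first exact: PP_active. exact: PP_iso. Qed.

End WithY.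
End Construct.

Lemma equiv_side (S : finType) (Q : cube Lambda S) (side : bool) : is_cube Q ->
  (strongly_biCartesian Q <->
     exists P : cube Delta S, is_cube P /\ strongly_biCartesian P /\
       active_cube side P /\ cube_iso Q (cube_image P)).
Proof.
move=> hQ; split.
- move=> H.
  have hpb : forall (T : {set S}) s s', s != s' -> s \notin T -> s' \notin T ->
    LPB (cob Q (s |: (s' |: T))) (cob Q (s |: T)) (cob Q (s' |: T)) (cob Q T)
      (cmor Q (s |: T) (s |: (s' |: T))) (cmor Q (s' |: T) (s |: (s' |: T)))
      (cmor Q T (s |: T)) (cmor Q T (s' |: T)) := fun T s s' a b c => proj1 (H T s s' a b c).
  have [y hy] := exists_jump side (FV hQ (sub0set [set: S])).
  have [P [hP [ha hiso]]] := construct_y hQ hpb hy.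
  exists P. split => //. split; last by split.
  apply: (sbc_L2D hP). by apply/(sbc_iso hQ (is_cube_image hP) hiso).
- move=> [P [hP [hs [ha hiso]]]]. apply/(sbc_iso hQ (is_cube_image hP) hiso).
  exact: (sbc_D2L hP ha hs).
Qed.

Unset Implicit Arguments.

Theorem corollary4p2p5 (S : finType) (Q : cube Lambda S) :
  is_cube Q ->
  (strongly_biCartesian Q <->
     exists P : cube Delta S, is_cube P /\ strongly_biCartesian P /\
       left_active_cube P /\ cube_iso Q (cube_image P)) /\
  (strongly_biCartesian Q <->
     exists P : cube Delta S, is_cube P /\ strongly_biCartesian P /\
       right_active_cube P /\ cube_iso Q (cube_image P)).
Proof.
move=> hQ. split.
- exact: (equiv_side false hQ).
- exact: (equiv_side true hQ).
Qed.
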